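(* Let $\Gamma$ be a typing environment, $\sigma$ a channel state and $P$ a process. If the configuration $\sigma\triangleright P$ is well-typed, $\Gamma\vdash\sigma\triangleright P$, then $\sigma\triangleright P$ has no error reduction, i.e., $\sigma\triangleright P\not\to^{\mathrm{err}}$.
   Context: Syntax (π-calculus with allocation). Channel names $c,d\in\mathcal N$, variables $x,y$, identifiers $u,v$ ranging over both, process variables $X$. Processes: $P,Q ::= u!\langle\vec v\rangle.P \mid u?(\vec x).P \mid \mathbf 0 \mid \mathsf{if}\ u=v\ \mathsf{then}\ P\ \mathsf{else}\ Q \mid \mathsf{rec}\,X.P \mid X \mid P\mid Q \mid (\nu c{:}s)P \mid \mathsf{alloc}\,x.P \mid \mathsf{free}\,u.P$, where $s\in\{\top,\bot\}$ (allocated/deallocated). Input binds $\vec x$, $\mathsf{alloc}$ binds $x$, $(\nu c{:}s)$ binds $c$, $\mathsf{rec}$ binds $X$. A channel state is a finite partial map $\sigma$ from channel names to $\{\top,\bot\}$; a configuration $\sigma\triangleright P$ requires the free names of $P$ to lie in $\mathrm{dom}(\sigma)$; it is closed if $P$ has no free variables. Contexts: $\mathcal C ::= [-]\mid \mathcal C\mid P\mid P\mid\mathcal C\mid (\nu c)\mathcal C$, applied to configurations by $[\sigma\triangleright P]=\sigma\triangleright P$; if $\mathcal C[\sigma\triangleright P]=\sigma'\triangleright P'$ then $(\mathcal C\mid Q)[\sigma\triangleright P]=\sigma'\triangleright(P'\mid Q)$, $(Q\mid\mathcal C)[\sigma\triangleright P]=\sigma'\triangleright(Q\mid P')$; and if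 $\mathcal C[\sigma\triangleright P]=\sigma',c{:}s\triangleright P'$ then $((\nu c)\mathcal C)[\sigma\triangleright P]=\sigma'\triangleright(\nu c{:}s)P'$. $\equiv$ is a standard π-calculus structural equivalence. Error reduction $\to^{\mathrm{err}}$ is the least relation on configurations closed under contexts (if $\sigma\triangleright P\to^{\mathrm{err}}$ then $\mathcal C[\sigma\triangleright P]\to^{\mathrm{err}}$) satisfying: $\sigma\triangleright c!\langle\vec d\rangle.P\mid c?(\vec x).Q\to^{\mathrm{err}}$ if $|\vec d|\ne|\vec x|$; $\sigma\triangleright c!\langle\vec d\rangle.P\to^{\mathrm{err}}$ if $\sigma(c)=\bot$; $\sigma\triangleright c?(\vec x).Q\to^{\mathrm{err}}$ if $\sigma(c)=\bot$; and $\sigma\triangleright P\to^{\mathrm{err}}$ if $P\equiv Q$ and $\sigma\triangleright Q\to^{\mathrm{err}}$. Types: $T::=[T_1,\dots,T_n]^a\mid\mathsf{Proc}$, attributes $a::=\mathsf{aff}\mid\mathsf{un}\mid\bullet_i$ ($i\in\mathbb N$; $\bullet_i$ = unique after $i$ steps). Typing environments are finite multisets of assumptions $u:T$ or $X:\mathsf{Proc}$. Decrement: $\Gamma,u:[\vec T]^{a-1}$ is $\Gamma$ if $a=\mathsf{aff}$, $\Gamma,u:[\vec T]^{\mathsf{un}}$ if $a=\mathsf{un}$, $\Gamma,u:[\vec T]^{\bullet_i}$ if $a=\bullet_{i+1}$. Splitting: $[\vec T]^{\mathsf{un}}=[\vec T]^{\mathsf{un}}\circ[\vec T]^{\mathsf{un}}$,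 $\mathsf{Proc}=\mathsf{Proc}\circ\mathsf{Proc}$, $[\vec T]^{\bullet_i}=[\vec T]^{\mathsf{aff}}\circ[\vec T]^{\bullet_{i+1}}$. Subtyping rules: $\bullet_i\le\bullet_{i+1}$, $\bullet_{i+1}\le\mathsf{un}$, $\mathsf{un}\le\mathsf{aff}$, $[\vec T]^{a_1}\le[\vec T]^{a_2}$ if $a_1\le a_2$. The judgement $\Gamma\vdash P$ is inductively defined by (bound variables fresh, commas denote multiset union): if $\Gamma,u:[\vec T]^{a-1},\vec x:\vec T\vdash P$ then $\Gamma,u:[\vec T]^a\vdash u?(\vec x).P$; if $\Gamma,u:[\vec T]^{a-1}\vdash P$ then $\Gamma,u:[\vec T]^a,\vec v:\vec T\vdash u!\langle\vec v\rangle.P$; if $\Gamma_1\vdash P$ and $\Gamma_2\vdash Q$ then $\Gamma_1,\Gamma_2\vdash P\mid Q$; if $u,v$ occur in $\Gamma$, $\Gamma\vdash P$ and $\Gamma\vdash Q$ then $\Gamma\vdash\mathsf{if}\ u=v\ \mathsf{then}\ P\ \mathsf{else}\ Q$; if $\Gamma^{\mathsf{un}},X:\mathsf{Proc}\vdash P$ then $\Gamma^{\mathsf{un}}\vdash\mathsf{rec}\,X.P$, where $\Gamma^{\mathsf{un}}$ contains only unrestricted assumptions; $X:\mathsf{Proc}\vdash X$; if $\Gamma,x:[\vec T]^{\bullet_0}\vdash P$ then $\Gamma\vdash\mathsf{alloc}\,x.P$; if $\Gamma\vdash P$ then $\Gamma,u:[\vec T]^{\bullet_0}\vdash\mathsf{free}\,u.P$;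 $\emptyset\vdash\mathbf 0$; if $\Gamma,c:T\vdash P$ then $\Gamma\vdash(\nu c{:}\top)P$; if $\Gamma\vdash P$ then $\Gamma\vdash(\nu c{:}\bot)P$; and the structural rules: if $T=T_1\circ T_2$ and $\Gamma,u:T_1,u:T_2\vdash P$ then $\Gamma,u:T\vdash P$; if $\Gamma\vdash P$ then $\Gamma,u:T\vdash P$; if $\Gamma,u:T_2\vdash P$ and $T_1\le T_2$ then $\Gamma,u:T_1\vdash P$; if $\Gamma,u:[\vec T_2]^{\bullet_0}\vdash P$ then $\Gamma,u:[\vec T_1]^{\bullet_0}\vdash P$. Configuration typing: $\Gamma\vdash\sigma\triangleright P$ holds iff $\sigma(c)=\top$ for every channel name $c\in\mathrm{dom}(\Gamma)$, $\Gamma\vdash P$, and $\Gamma$ is a partial function. *)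

(* Defs.v *)
From Stdlib Require Import List Arith Permutation Relations.
Import ListNotations.

Inductive ident : Type :=
| IChan (c : nat)
| IVar (x : nat).

(* Channel allocation states: Top = allocated, Bot = deallocated. *)
Inductive cstate : Type := Top | Bot.

Inductive proc : Type :=
| POut (u : ident) (vs : list ident) (P : proc)
| PIn (u : ident) (xs : list nat) (P : proc)      (* u?(xs).P, binds variables xs *)
| PNil
| PIf (u v : ident) (P Q : proc)
| PRec (X : nat) (P : proc)
| PVar (X : nat)
| PPar (P Q : proc)
| PNu (c : nat) (s : cstate) (P : proc)           (* (nu c:s) P, binds channel c *)
| PAlloc (x : nat) (P : proc)                     (* alloc x.P, binds variable x *)
| PFree (u : ident) (P : proc).

Definition chans (us : list ident) : list nat :=
  flat_map (fun u => match u with IChan c => [c] | IVar _ => [] end) us.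

Fixpoint fn (P : proc) : list nat :=
  match P with
  | POut u vs P => chans (u :: vs) ++ fn P
  | PIn u _ P => chans [u] ++ fn P
  | PNil => []
  | PIf u v P Q => chans [u; v] ++ fn P ++ fn Q
  | PRec _ P => fn P
  | PVar _ => []
  | PPar P Q => fn P ++ fn Q
  | PNu c _ P => filter (fun d => negb (Nat.eqb d c)) (fn P)
  | PAlloc _ P => fn P
  | PFree u P => chans [u] ++ fn P
  end.

Fixpoint names (P : proc) : list nat :=
  match P with
  | POut u vs P => chans (u :: vs) ++ names P
  | PIn u _ P => chans [u] ++ names P
  | PNil => []
  | PIf u v P Q => chans [u; v] ++ names P ++ names Q
  | PRec _ P => names P
  | PVar _ => []
  | PPar P Q => names P ++ names Q
  | PNu c _ P => c :: names P
  | PAlloc _ P => names P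
  | PFree u P => chans [u] ++ names P
  end.

Definition ren_id (c d : nat) (u : ident) : ident :=
  match u with
  | IChan e => if Nat.eqb e c then IChan d else IChan e
  | IVar x => IVar x
  end.

Fixpoint rename (c d : nat) (P : proc) : proc :=
  match P with
  | POut u vs P => POut (ren_id c d u) (map (ren_id c d) vs) (rename c d P)
  | PIn u xs P => PIn (ren_id c d u) xs (rename c d P)
  | PNil => PNil
  | PIf u v P Q => PIf (ren_id c d u) (ren_id c d v) (rename c d P) (rename c d Q)
  | PRec X P => PRec X (rename c d P)
  | PVar X => PVar X
  | PPar P Q => PPar (rename c d P) (rename c d Q)
  | PNu e s P => if Nat.eqb e c then PNu e s P else PNu e s (rename c d P)
  | PAlloc x P => PAlloc x (rename c d P)
  | PFree u P => PFree (ren_id c d u) (rename c d P)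
  end.

Inductive scong : proc -> proc -> Prop :=
| sc_refl P : scong P P
| sc_sym P Q : scong P Q -> scong Q P
| sc_trans P Q R : scong P Q -> scong Q R -> scong P R
| sc_out u vs P P' : scong P P' -> scong (POut u vs P) (POut u vs P')
| sc_in u xs P P' : scong P P' -> scong (PIn u xs P) (PIn u xs P')
| sc_if u v P P' Q Q' : scong P P' -> scong Q Q' -> scong (PIf u v P Q) (PIf u v P' Q')
| sc_rec X P P' : scong P P' -> scong (PRec X P) (PRec X P')
| sc_par P P' Q Q' : scong P P' -> scong Q Q' -> scong (PPar P Q) (PPar P' Q')
| sc_nu c s P P' : scong P P' -> scong (PNu c s P) (PNu c s P')
| sc_alloc x P P' : scong P P' -> scong (PAlloc x P) (PAlloc x P')
| sc_free u P P' : scong P P' -> scong (PFree u P) (PFree u P')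
| sc_par_nil P : scong (PPar P PNil) P
| sc_par_comm P Q : scong (PPar P Q) (PPar Q P)
| sc_par_assoc P Q R : scong (PPar (PPar P Q) R) (PPar P (PPar Q R))
| sc_nu_nil c s : scong (PNu c s PNil) PNil
| sc_nu_swap c s d t P : c <> d -> scong (PNu c s (PNu d t P)) (PNu d t (PNu c s P))
| sc_extr c s P Q : ~ In c (fn Q) -> scong (PPar (PNu c s P) Q) (PNu c s (PPar P Q))
| sc_alpha c d s P : ~ In d (names P) -> scong (PNu c s P) (PNu d s (rename c d P)).

Definition chstate := nat -> option cstate.

Definition finite_state (sigma : chstate) : Prop :=
  exists l : list nat, forall c, sigma c <> None -> In c l.

Definition upd (sigma : chstate) (c : nat) (s : cstate) : chstate :=
  fun d => if Nat.eqb d c then Some s else sigma d.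

Definition is_config (sigma : chstate) (P : proc) : Prop :=
  forall c, In c (fn P) -> sigma c <> None.

Definition all_chans (vs : list ident) : Prop :=
  Forall (fun v => exists d, v = IChan d) vs.

Inductive err : chstate -> proc -> Prop :=
| err_arity sigma c ds P xs Q :
    all_chans ds -> length ds <> length xs ->
    err sigma (PPar (POut (IChan c) ds P) (PIn (IChan c) xs Q))
| err_out sigma c ds P :
    all_chans ds -> sigma c = Some Bot -> err sigma (POut (IChan c) ds P)
| err_in sigma c xs Q :
    sigma c = Some Bot -> err sigma (PIn (IChan c) xs Q)
| err_par_l sigma P Q : err sigma P -> err sigma (PPar P Q)
| err_par_r sigma P Q : err sigma Q -> err sigma (PPar P Q)
| err_nu sigma c s P :
    sigma c = None -> err (upd sigma c s) P -> err sigma (PNu c s P)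
| err_struct sigma P Q : scong P Q -> err sigma Q -> err sigma P.

Inductive attr : Type :=
| Aff
| Un
| Uniq (i : nat).   (* bullet_i : unique after i steps *)

Inductive ty : Type :=
| TCh (ts : list ty) (a : attr)
| TProc.

Inductive key : Type :=
| KId (u : ident)
| KPV (X : nat).

Definition env := list (key * ty).   (* a multiset, up to Permutation *)

(* Gamma, u:[ts]^(a-1)  (None when a = bullet_0, where it is undefined) *)
Definition dec (u : ident) (ts : list ty) (a : attr) : option env :=
  match a with
  | Aff => Some []
  | Un => Some [(KId u, TCh ts Un)]
  | Uniq (S i) => Some [(KId u, TCh ts (Uniq i))]
  | Uniq 0 => None
  end.

Inductive split : ty -> ty -> ty -> Prop :=
| split_un ts : split (TCh ts Un) (TCh ts Un) (TCh ts Un)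
| split_proc : split TProc TProc TProc
| split_uniq ts i : split (TCh ts (Uniq i)) (TCh ts Aff) (TCh ts (Uniq (S i))).

Inductive attr_le1 : attr -> attr -> Prop :=
| ale_uniq i : attr_le1 (Uniq i) (Uniq (S i))
| ale_uniq_un i : attr_le1 (Uniq (S i)) Un
| ale_un_aff : attr_le1 Un Aff.

Definition attr_le : attr -> attr -> Prop := clos_refl_trans attr attr_le1.

Inductive subty : ty -> ty -> Prop :=
| subty_ch ts a1 a2 : attr_le a1 a2 -> subty (TCh ts a1) (TCh ts a2).

Definition unrestricted (T : ty) : Prop :=
  match T with
  | TCh _ Un => True
  | TProc => True
  | _ => False
  end.

Definition var_env (xs : list nat) (ts : list ty) : env :=
  combine (map (fun x => KId (IVar x)) xs) ts.

Definition id_env (vs : list ident) (ts : list ty) : env :=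
  combine (map KId vs) ts.

Definition dom (G : env) : list key := map fst G.

(* bound channel names are taken fresh (Barendregt convention); the rule
   typ_nu_alpha makes typing of restrictions invariant under alpha-renaming *)
Inductive typ : env -> proc -> Prop :=
| typ_in G u ts a D xs P :
    dec u ts a = Some D -> length xs = length ts ->
    typ (G ++ D ++ var_env xs ts) P ->
    typ (G ++ [(KId u, TCh ts a)]) (PIn u xs P)
| typ_out G u ts a D vs P :
    dec u ts a = Some D -> length vs = length ts ->
    typ (G ++ D) P ->
    typ (G ++ (KId u, TCh ts a) :: id_env vs ts) (POut u vs P)
| typ_par G1 G2 P Q : typ G1 P -> typ G2 Q -> typ (G1 ++ G2) (PPar P Q)
| typ_if G u v P Q :
    In (KId u) (dom G) -> In (KId v) (dom G) ->
    typ G P -> typ G Q -> typ G (PIf u v P Q)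
| typ_rec G X P :
    Forall (fun kT => unrestricted (snd kT)) G ->
    typ (G ++ [(KPV X, TProc)]) P -> typ G (PRec X P)
| typ_var X : typ [(KPV X, TProc)] (PVar X)
| typ_alloc G x ts P :
    typ (G ++ [(KId (IVar x), TCh ts (Uniq 0))]) P -> typ G (PAlloc x P)
| typ_free G u ts P :
    typ G P -> typ (G ++ [(KId u, TCh ts (Uniq 0))]) (PFree u P)
| typ_nil : typ [] PNil
| typ_nu_top G c T P :
    ~ In (KId (IChan c)) (dom G) ->
    typ (G ++ [(KId (IChan c), T)]) P -> typ G (PNu c Top P)
| typ_nu_bot G c P :
    ~ In (KId (IChan c)) (dom G) ->
    typ G P -> typ G (PNu c Bot P)
| typ_nu_alpha G c d s P :
    ~ In d (names P) ->
    typ G (PNu d s (rename c d P)) -> typ G (PNu c s P)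
| typ_perm G G' P : Permutation G G' -> typ G P -> typ G' P
| typ_split G k T T1 T2 P :
    split T T1 T2 -> typ (G ++ [(k, T1); (k, T2)]) P -> typ (G ++ [(k, T)]) P
| typ_weak G k T P : typ G P -> typ (G ++ [(k, T)]) P
| typ_sub G k T1 T2 P :
    subty T1 T2 -> typ (G ++ [(k, T2)]) P -> typ (G ++ [(k, T1)]) P
| typ_uniq0 G k ts1 ts2 P :
    typ (G ++ [(k, TCh ts2 (Uniq 0))]) P -> typ (G ++ [(k, TCh ts1 (Uniq 0))]) P.

Definition config_typed (G : env) (sigma : chstate) (P : proc) : Prop :=
  (forall c, In (KId (IChan c)) (dom G) -> sigma c = Some Top) /\
  typ G P /\
  NoDup (dom G).

(* Main.v *)
Require Import Defs.
From Stdlib Require Import List Arith Lia Permutation Relations.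
Import ListNotations.

Definition updo (r : nat -> option nat) (c : nat) (v : option nat) : nat -> option nat :=
  fun e => if Nat.eqb e c then v else r e.

Fixpoint ok (r : nat -> option nat) (P : proc) : Prop :=
  match P with
  | POut (IChan c) ds _ => r c = Some (length ds)
  | PIn (IChan c) xs _ => r c = Some (length xs)
  | PPar P1 P2 => ok r P1 /\ ok r P2
  | PNu c Top P1 => exists n, ok (updo r c (Some n)) P1
  | PNu c Bot P1 => ok (updo r c None) P1
  | _ => True
  end.

Lemma opt_dec (x y : option nat) : {x = y} + {x <> y}.
Proof. decide equality; apply Nat.eq_dec. Qed.

Lemma ok_mono P : forall r r', (forall c n, r c = Some n -> r' c = Some n) -> ok r P -> ok r' P.
Proof.
  induction P; intros r r' H Hok; simpl in *; auto.
  - destruct u; auto.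
  - destruct u; auto.
  - destruct Hok; split; eauto.
  - assert (Hu : forall v e n, updo r c v e = Some n -> updo r' c v e = Some n)
      by (intros v e n; unfold updo; destruct (e =? c); auto).
    destruct s.
    + destruct Hok as [n Hn]; exists n; eauto.
    + eauto.
Qed.

Lemma ok_ext P r r' : (forall x, r x = r' x) -> ok r P -> ok r' P.
Proof. intros H; apply ok_mono; intros c n; rewrite H; auto. Qed.

Lemma ok_agree P : forall r r', (forall c, In c (fn P) -> r c = r' c) -> ok r P -> ok r' P.
Proof.
  induction P; intros r r' H Hok; simpl in *; auto.
  - destruct u; auto. rewrite <- H; auto. left; auto.
  - destruct u; auto. rewrite <- H; auto. left; auto.
  - destruct Hok; split; [eapply IHP1|eapply IHP2]; try eassumption;
      intros; apply H; apply in_or_app; auto.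
  - assert (Hu : forall v, forall e, In e (fn P) -> updo r c v e = updo r' c v e).
    { intros v e He; unfold updo; destruct (Nat.eqb_spec e c); auto.
      apply H; apply filter_In; split; auto. apply Nat.eqb_neq in n. rewrite n; auto. }
    destruct s.
    + destruct Hok as [n Hn]; exists n; eauto.
    + eauto.
Qed.

Lemma fn_names P : forall x, In x (fn P) -> In x (names P).
Proof.
  induction P; intros y H; simpl in *; repeat rewrite in_app_iff in *; intuition.
  apply filter_In in H; intuition.
Qed.

Lemma ok_ren P : forall r r' c d, ~ In d (names P) -> r' d = r c ->
  (forall e, e <> c -> e <> d -> r' e = r e) -> (ok r P <-> ok r' (rename c d P)).
Proof.
  induction P; intros r r' c0 d Hd H1 H2; simpl in *; try tauto.
  - destruct u as [e|x]; simpl; try tauto.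
    rewrite length_map.
    destruct (Nat.eqb_spec e c0); simpl.
    + subst; rewrite H1; tauto.
    + rewrite H2; auto; try tauto. intro; subst; apply Hd; left; auto.
  - destruct u as [e|x]; simpl; try tauto.
    destruct (Nat.eqb_spec e c0); simpl.
    + subst; rewrite H1; tauto.
    + rewrite H2; auto; try tauto. intro; subst; apply Hd; left; auto.
  - rewrite in_app_iff in Hd.
    rewrite (IHP1 r r' c0 d), (IHP2 r r' c0 d); auto; tauto.
  - destruct (Nat.eqb_spec c c0).
    + subst.
      assert (Ha : forall v x, In x (fn P) -> updo r c0 v x = updo r' c0 v x).
      { intros v x Hx; unfold updo; destruct (Nat.eqb_spec x c0); auto.
        symmetry; apply H2; auto. intro; subst; apply Hd; right; apply fn_names; auto. }
      destruct s; simpl; split.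
      * intros [n Hn]; exists n; eapply ok_agree; [|eauto]; auto.
      * intros [n Hn]; exists n; eapply ok_agree; [|eauto]; intros; symmetry; auto.
      * intros Hn; eapply ok_agree; [|eauto]; auto.
      * intros Hn; eapply ok_agree; [|eauto]; intros; symmetry; auto.
    + assert (Hcd : c <> d) by (intro; subst; apply Hd; left; auto).
      assert (Hd' : ~ In d (names P)) by (intro; apply Hd; right; auto).
      assert (Hi : forall v, ok (updo r c v) P <-> ok (updo r' c v) (rename c0 d P)).
      { intros v; apply IHP; auto.
        - unfold updo. destruct (Nat.eqb_spec d c); [congruence|].
          destruct (Nat.eqb_spec c0 c); [congruence|]. auto.
        - intros e He1 He2; unfold updo; destruct (e =? c); auto. }
      destruct s; simpl.
      * split; intros [m Hm]; exists m; apply Hi; auto.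
      * apply Hi.
Qed.

Lemma ok_scong P Q : scong P Q -> forall r, ok r P <-> ok r Q.
Proof.
  induction 1; intros r; simpl; try tauto.
  - rewrite IHscong; tauto.
  - rewrite IHscong1; auto.
  - rewrite IHscong1, IHscong2; tauto.
  - destruct s; [split; intros [n Hn]; exists n; apply IHscong; auto|apply IHscong].
  - destruct s; [split; auto; intros; exists 0; auto|tauto].
  - assert (Hc : forall r v w x, updo (updo r c v) d w x = updo (updo r d w) c v x).
    { intros r0 v w x; unfold updo; destruct (Nat.eqb_spec x d); destruct (Nat.eqb_spec x c);
        subst; auto; congruence. }
    destruct s; destruct t; simpl; split.
    + intros [n [m Hm]]; exists m, n; eapply ok_ext; [|eauto]; auto.
    + intros [n [m Hm]]; exists m, n; eapply ok_ext; [|eauto]; auto.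
    + intros [n Hm]; exists n; eapply ok_ext; [|eauto]; auto.
    + intros [n Hm]; exists n; eapply ok_ext; [|eauto]; auto.
    + intros [n Hm]; exists n; eapply ok_ext; [|eauto]; auto.
    + intros [n Hm]; exists n; eapply ok_ext; [|eauto]; auto.
    + intros Hm; eapply ok_ext; [|eauto]; auto.
    + intros Hm; eapply ok_ext; [|eauto]; auto.
  - assert (Hq : forall v, ok r Q <-> ok (updo r c v) Q).
    { intros v; split; apply ok_agree; intros x Hx; unfold updo;
        destruct (Nat.eqb_spec x c); subst; tauto. }
    destruct s; simpl.
    + split.
      * intros [[n Hn] HQ]; exists n; split; auto; apply Hq; auto.
      * intros [n [Hn HQ]]; split; [exists n; auto|]; apply (Hq (Some n)); auto.
    + rewrite <- (Hq None); tauto.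
  - assert (Hi : forall v, ok (updo r c v) P <-> ok (updo r d v) (rename c d P)).
    { intros v; apply ok_ren; auto.
      - unfold updo; rewrite !Nat.eqb_refl; auto.
      - intros e H1 H2; unfold updo; apply Nat.eqb_neq in H1, H2; rewrite H1, H2; auto. }
    destruct s; [split; intros [n Hn]; exists n; apply Hi; auto|apply Hi].
Qed.

Lemma safe sigma P : err sigma P -> forall r, ok r P ->
  (forall c, sigma c = Some Bot -> r c = None) -> False.
Proof.
  induction 1; intros r Hok Hc; simpl in Hok.
  - destruct Hok as [A B]; rewrite A in B; injection B; auto.
  - rewrite Hc in Hok; auto; discriminate.
  - rewrite Hc in Hok; auto; discriminate.
  - destruct Hok; eauto.
  - destruct Hok; eauto.
  - destruct s.
    + destruct Hok as [n Hn]; apply (IHerr _ Hn).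
      intros e He; unfold upd, updo in *; destruct (e =? c); [discriminate|auto].
    + apply (IHerr _ Hok).
      intros e He; unfold upd, updo in *; destruct (e =? c); auto.
  - apply (IHerr r); auto. apply (ok_scong _ _ H); auto.
Qed.

Definition iskey (e : nat) (k : key) : bool :=
  match k with KId (IChan d) => Nat.eqb d e | _ => false end.
Definition cnt (G : env) (e : nat) : nat := length (filter (fun p => iskey e (fst p)) G).
Definition zero (G : env) (e : nat) : Prop := exists ts, In (KId (IChan e), TCh ts (Uniq 0)) G.
Definition nb (G : env) : Prop := forall e, zero G e -> cnt G e <= 1.
Definition arity (a : attr) (ts : list ty) : option nat :=
  match a with Uniq 0 => None | _ => Some (length ts) end.
Definition compat (r : nat -> option nat) (G : env) : Prop :=
  forall c ts a, In (KId (IChan c), TCh ts a) G -> r c = arity a ts.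

Lemma iskey_true e k : iskey e k = true -> k = KId (IChan e).
Proof. destruct k as [[d|x]|X]; simpl; try discriminate; intros H; apply Nat.eqb_eq in H; subst; auto. Qed.

Lemma cnt_app A B e : cnt (A ++ B) e = cnt A e + cnt B e.
Proof. unfold cnt; rewrite filter_app, length_app; auto. Qed.

Lemma cnt_one k T e : cnt [(k, T)] e = if iskey e k then 1 else 0.
Proof. unfold cnt; simpl; destruct (iskey e k); auto. Qed.

Lemma in_cnt G c T : In (KId (IChan c), T) G -> 1 <= cnt G c.
Proof.
  induction G as [|[k U] G IH]; simpl; [tauto|]. intros [H|H].
  - injection H; intros; subst; unfold cnt; simpl; rewrite Nat.eqb_refl; simpl; lia.
  - specialize (IH H); unfold cnt in *; simpl; destruct (iskey c k); simpl; lia.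
Qed.

Lemma cnt_perm G G' e : Permutation G G' -> cnt G e = cnt G' e.
Proof.
  unfold cnt; induction 1; simpl; auto.
  - destruct (iskey e (fst x)); simpl; auto.
  - destruct (iskey e (fst x)); destruct (iskey e (fst y)); simpl; auto.
  - congruence.
Qed.

Lemma notin_cnt G c : ~ In (KId (IChan c)) (dom G) -> cnt G c = 0.
Proof.
  induction G as [|[k U] G IH]; simpl; auto. intros H.
  unfold cnt in *; simpl. destruct (iskey c k) eqn:E.
  - apply iskey_true in E; subst; tauto.
  - apply IH; tauto.
Qed.

Lemma in_dom G k T : In (k, T) G -> In k (dom G).
Proof. intros H; apply (in_map fst) in H; exact H. Qed.

Lemma nb_last G c T T' : nb (G ++ [(KId (IChan c), T)]) -> zero (G ++ [(KId (IChan c), T)]) c ->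
  In (KId (IChan c), T') G -> False.
Proof.
  intros Hnb Hz Hin. specialize (Hnb c Hz). rewrite cnt_app, cnt_one in Hnb.
  simpl in Hnb; rewrite Nat.eqb_refl in Hnb. apply in_cnt in Hin. lia.
Qed.

Lemma zero_none r G c : compat r G -> zero G c -> r c = None.
Proof. intros H [ts Hz]; rewrite (H _ _ _ Hz); auto. Qed.

Lemma in_last {A} (x y : A) G : In x (G ++ [y]) <-> In x G \/ y = x.
Proof. rewrite in_app_iff; simpl; tauto. Qed.

Lemma transfer Gc Gp P r r0 :
  (forall r, nb Gp -> compat r Gp -> exists r', (forall c, r' c <> r c -> zero Gp c) /\ ok r' P) ->
  nb Gp -> compat r0 Gp -> (forall e, zero Gp e -> zero Gc e) -> (forall e, r0 e <> r e -> zero Gc e) ->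
  exists r', (forall c, r' c <> r c -> zero Gc c) /\ ok r' P.
Proof.
  intros IH Hnb Hc Hz Hd. destruct (IH r0 Hnb Hc) as [r1 [H1 H2]]. exists r1; split; auto.
  intros c Hne. destruct (opt_dec (r1 c) (r0 c)) as [e|e].
  - rewrite e in Hne; auto.
  - auto.
Qed.

Lemma attr_le_zero a1 a2 : attr_le a1 a2 -> a2 = Uniq 0 -> a1 = Uniq 0.
Proof.
  induction 1; intros; subst; auto.
  inversion H.
Qed.

Lemma attr_eq (a : attr) : {a = Uniq 0} + {a <> Uniq 0}.
Proof. destruct a as [| |[|i]]; try (right; discriminate); left; auto. Qed.

Lemma typ_ok G P : typ G P -> forall r, nb G -> compat r G ->
  exists r', (forall c, r' c <> r c -> zero G c) /\ ok r' P.
Proof.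
  induction 1 as [G u ts a D xs P Hd Hl Ht IH | G u ts a D vs P Hd Hl Ht IH
    | G1 G2 P Q H1 IH1 H2 IH2 | G u v P Q Hu Hv H1 IH1 H2 IH2 | G X P Hf H IH | X
    | G x ts P H IH | G u ts P H IH | | G c T P Hn H IH | G c P Hn H IH
    | G c d s P Hn H IH | G G' P Hp H IH | G k T T1 T2 P Hs H IH | G k T P H IH
    | G k T1 T2 P Hs H IH | G k ts1 ts2 P H IH];
    intros r Hnb Hc;
    try (exists r; split; [intros c0 Hc0; exfalso; apply Hc0; reflexivity|simpl; auto]; fail).
  -
    exists r; split; [intros c0 Hc0; exfalso; apply Hc0; reflexivity|].
    destruct u as [c|x]; simpl; auto. rewrite (Hc c ts a); [|apply in_last; auto].
    destruct a as [| |[|i]]; simpl in *; try discriminate; congruence.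
  -
    exists r; split; [intros c0 Hc0; exfalso; apply Hc0; reflexivity|].
    destruct u as [c|x]; simpl; auto. rewrite (Hc c ts a); [|apply in_app_iff; right; left; auto].
    destruct a as [| |[|i]]; simpl in *; try discriminate; congruence.
  -
    assert (Hz1 : forall e, zero G1 e -> zero (G1 ++ G2) e)
      by (intros e [ts Ht]; exists ts; apply in_app_iff; auto).
    assert (Hz2 : forall e, zero G2 e -> zero (G1 ++ G2) e)
      by (intros e [ts Ht]; exists ts; apply in_app_iff; auto).
    destruct (IH1 r) as [r1 [D1 O1]].
    { intros e He. specialize (Hnb e (Hz1 e He)). rewrite cnt_app in Hnb. lia. }
    { intros c ts a Hi; apply Hc; apply in_app_iff; auto. }
    destruct (IH2 r) as [r2 [D2 O2]].
    { intros e He. specialize (Hnb e (Hz2 e He)). rewrite cnt_app in Hnb. lia. }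
    { intros c ts a Hi; apply Hc; apply in_app_iff; auto. }
    exists (fun c => match r1 c with Some n => Some n | None => r2 c end). split.
    + intros c Hne. destruct (r1 c) eqn:E.
      * apply Hz1, D1; congruence.
      * apply Hz2, D2; auto.
    + simpl; split.
      * eapply ok_mono; [|eauto]. intros c n E; rewrite E; auto.
      * eapply ok_mono; [|eauto]. intros c n E. destruct (r1 c) eqn:E1; auto.
        assert (Hboth : zero G1 c -> zero G2 c -> False).
        { intros Za Zb. destruct Za as [t1 Ta]; destruct Zb as [t2 Tb].
          assert (Hz : zero (G1 ++ G2) c) by (exists t1; apply in_app_iff; auto).
          specialize (Hnb c Hz). rewrite cnt_app in Hnb.
          apply in_cnt in Ta; apply in_cnt in Tb. lia. }
        destruct (opt_dec (r1 c) (r c)) as [e1|e1].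
        -- destruct (opt_dec (r2 c) (r c)) as [e2|e2]; [congruence|].
           specialize (D2 c e2). rewrite (zero_none _ _ _ Hc (Hz2 _ D2)) in e1. congruence.
        -- specialize (D1 c e1). pose proof (zero_none _ _ _ Hc (Hz1 _ D1)) as Hrc.
           assert (Z2 : zero G2 c) by (apply D2; congruence). exfalso; auto.
  -
    set (v := match T with TCh ts a => arity a ts | TProc => None end).
    destruct (IH (updo r c v)) as [r1 [D1 O1]].
    { intros e [ts He]. rewrite cnt_app, cnt_one. apply in_last in He. simpl.
      destruct (Nat.eqb_spec c e).
      - subst. rewrite notin_cnt; auto.
      - destruct He as [He|He]; [|congruence].
        assert (Hz : zero G e) by (exists ts; auto). specialize (Hnb e Hz). lia. }
    { intros e ts a He. apply in_last in He. unfold updo. destruct (Nat.eqb_spec e c).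
      - subst. destruct He as [He|He].
        + exfalso; apply Hn; eapply in_dom; eauto.
        + injection He; intros; subst; auto.
      - destruct He as [He|He]; [apply Hc; auto|congruence]. }
    exists (fun e => if Nat.eqb e c then r e else r1 e). split.
    + intros e Hne. destruct (Nat.eqb_spec e c); [congruence|].
      assert (Hne' : r1 e <> updo r c v e) by (unfold updo; apply Nat.eqb_neq in n; rewrite n; auto).
      destruct (D1 e Hne') as [ts He]. apply in_last in He. destruct He as [He|He].
      * exists ts; auto.
      * congruence.
    + simpl. exists (match r1 c with Some n => n | None => 0 end).
      eapply ok_mono; [|eauto]. intros e m E. unfold updo.
      destruct (Nat.eqb_spec e c); [subst; rewrite E; auto|]. rewrite E; auto.
  -
    destruct (IH (updo r c None)) as [r1 [D1 O1]]; auto.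
    { intros e ts a He. unfold updo. destruct (Nat.eqb_spec e c).
      - subst. exfalso; apply Hn; eapply in_dom; eauto.
      - apply Hc; auto. }
    exists (fun e => if Nat.eqb e c then r e else r1 e). split.
    + intros e Hne. destruct (Nat.eqb_spec e c); [congruence|].
      apply D1. unfold updo; apply Nat.eqb_neq in n; rewrite n; auto.
    + simpl. eapply ok_mono; [|eauto]. intros e m E. unfold updo.
      destruct (Nat.eqb_spec e c); [subst|rewrite E; auto].
      exfalso. assert (Hz : r1 c <> updo r c None c) by (unfold updo; rewrite Nat.eqb_refl; congruence).
      destruct (D1 c Hz) as [ts Ht]. apply Hn; eapply in_dom; eauto.
  -
    destruct (IH r Hnb Hc) as [r1 [D1 O1]]. exists r1; split; auto.
    apply (ok_scong _ _ (sc_alpha c d s P Hn)); auto.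
  -
    apply (transfer G' G P r r IH).
    + intros e [ts He]. rewrite (cnt_perm _ _ _ Hp). apply Hnb. exists ts.
      eapply Permutation_in; eauto.
    + intros c ts a Hi; apply Hc; eapply Permutation_in; eauto.
    + intros e [ts He]; exists ts; eapply Permutation_in; eauto.
    + intros e Hne; congruence.
  -
    assert (NZ : forall ts, T1 <> TCh ts (Uniq 0) /\ T2 <> TCh ts (Uniq 0))
      by (intros ts; inversion Hs; split; discriminate).
    assert (Hzp : forall e, zero (G ++ [(k, T1); (k, T2)]) e -> zero G e).
    { intros e [ts He]. apply in_app_iff in He. destruct He as [He|[He|[He|[]]]].
      - exists ts; auto.
      - injection He; intros; subst. exfalso; apply (proj1 (NZ ts)); auto.
      - injection He; intros; subst. exfalso; apply (proj2 (NZ ts)); auto. }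
    assert (Hzc : forall e, zero G e -> zero (G ++ [(k, T)]) e)
      by (intros e [ts He]; exists ts; apply in_app_iff; auto).
    assert (Hkf : forall e, zero G e -> iskey e k = false).
    { intros e He. pose proof (Hnb e (Hzc e He)) as Hc1. rewrite cnt_app, cnt_one in Hc1.
      destruct He as [ts He]; apply in_cnt in He. destruct (iskey e k); auto; lia. }
    assert (Hnbp : nb (G ++ [(k, T1); (k, T2)])).
    { intros e He. apply Hzp in He. pose proof (Hnb e (Hzc e He)) as Hc1.
      rewrite cnt_app, cnt_one in Hc1. rewrite cnt_app. unfold cnt at 2; simpl.
      rewrite (Hkf e He) in *. simpl. lia. }
    inversion Hs; subst.
    + apply (transfer _ _ P r r IH); auto.
      * intros c ts0 a Hi. apply Hc. apply in_app_iff in Hi; apply in_app_iff.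
        simpl in *; tauto.
      * intros e He; congruence.
    + apply (transfer _ _ P r r IH); auto.
      * intros c ts0 a Hi. apply Hc. apply in_app_iff in Hi; apply in_app_iff.
        simpl in *; tauto.
      * intros e He; congruence.
    + destruct k as [[c|x]|X].
      * apply (transfer _ _ P r (updo r c (Some (length ts))) IH); auto.
        -- intros e ts' a' Hi. apply in_app_iff in Hi. unfold updo.
           destruct Hi as [Hi|[Hi|[Hi|[]]]].
           ++ destruct (Nat.eqb_spec e c); [subst|apply Hc; apply in_app_iff; auto].
              rewrite <- (Hc c ts' a'); [|apply in_app_iff; auto].
              rewrite (Hc c ts (Uniq i)); [|apply in_last; auto].
              destruct i; auto. exfalso; eapply nb_last; eauto. exists ts; apply in_last; auto.
           ++ injection Hi; intros; subst. rewrite Nat.eqb_refl; auto.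
           ++ injection Hi; intros; subst. rewrite Nat.eqb_refl; auto.
        -- intros e He. unfold updo in He. destruct (Nat.eqb_spec e c); [subst|congruence].
           rewrite (Hc c ts (Uniq i)) in He; [|apply in_last; auto].
           destruct i; [|simpl in He; congruence]. exists ts; apply in_last; auto.
      * apply (transfer _ _ P r r IH); auto.
        -- intros c ts0 a Hi. apply in_app_iff in Hi. destruct Hi as [Hi|[Hi|[Hi|[]]]];
             [apply Hc; apply in_app_iff; auto|discriminate|discriminate].
        -- intros e He; congruence.
      * apply (transfer _ _ P r r IH); auto.
        -- intros c ts0 a Hi. apply in_app_iff in Hi. destruct Hi as [Hi|[Hi|[Hi|[]]]];
             [apply Hc; apply in_app_iff; auto|discriminate|discriminate].
        -- intros e He; congruence.
  -
    apply (transfer (G ++ [(k, T)]) G P r r IH).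
    + intros e He. assert (Hz : zero (G ++ [(k, T)]) e) by (destruct He as [ts He]; exists ts; apply in_app_iff; auto).
      specialize (Hnb e Hz). rewrite cnt_app in Hnb. lia.
    + intros c ts a Hi; apply Hc; apply in_app_iff; auto.
    + intros e [ts He]; exists ts; apply in_app_iff; auto.
    + intros e Hne; congruence.
  -
    inversion Hs as [ts a1 a2 Hle]; subst.
    assert (Hzz : forall e, zero (G ++ [(k, TCh ts a2)]) e -> zero (G ++ [(k, TCh ts a1)]) e).
    { intros e [ts0 He]. apply in_last in He. destruct He as [He|He].
      - exists ts0; apply in_last; auto.
      - injection He; intros; subst. rewrite (attr_le_zero _ _ Hle eq_refl).
        exists ts0; apply in_last; auto. }
    assert (H12 : a1 <> Uniq 0 -> arity a1 ts = arity a2 ts).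
    { intros Ha. assert (a2 <> Uniq 0) by (intro E; apply Ha; apply (attr_le_zero _ _ Hle E)).
      destruct a1 as [| |[|]]; destruct a2 as [| |[|]]; simpl; congruence. }
    assert (Hnbp : nb (G ++ [(k, TCh ts a2)])).
    { intros e He. rewrite cnt_app, cnt_one. specialize (Hnb e (Hzz e He)).
      rewrite cnt_app, cnt_one in Hnb. auto. }
    destruct k as [[c|x]|X].
    + apply (transfer _ _ P r (updo r c (arity a2 ts)) IH); auto.
      * intros e ts' a' Hi. apply in_last in Hi. unfold updo. destruct Hi as [Hi|Hi].
        -- destruct (Nat.eqb_spec e c); [subst|apply Hc; apply in_last; auto].
           rewrite <- (Hc c ts' a'); [|apply in_last; auto].
           rewrite (Hc c ts a1); [|apply in_last; auto].
           destruct (attr_eq a1) as [E|E].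
           ++ subst. exfalso; apply (nb_last G c _ (TCh ts' a') Hnb); [exists ts; apply in_last; auto|exact Hi].
           ++ symmetry; auto.
        -- injection Hi; intros; subst. rewrite Nat.eqb_refl; auto.
      * intros e He. unfold updo in He. destruct (Nat.eqb_spec e c); [subst|congruence].
        rewrite (Hc c ts a1) in He; [|apply in_last; auto].
        destruct (attr_eq a1) as [E|E].
        -- subst. exists ts; apply in_last; auto.
        -- exfalso; apply He; symmetry; auto.
    + apply (transfer _ _ P r r IH); auto.
      * intros c ts0 a Hi. apply in_last in Hi. destruct Hi as [Hi|Hi];
          [apply Hc; apply in_last; auto|discriminate].
      * intros e He; congruence.
    + apply (transfer _ _ P r r IH); auto.
      * intros c ts0 a Hi. apply in_last in Hi. destruct Hi as [Hi|Hi];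
          [apply Hc; apply in_last; auto|discriminate].
      * intros e He; congruence.
  -
    assert (Hzz : forall e, zero (G ++ [(k, TCh ts2 (Uniq 0))]) e -> zero (G ++ [(k, TCh ts1 (Uniq 0))]) e).
    { intros e [ts He]. apply in_last in He. destruct He as [He|He].
      - exists ts; apply in_last; auto.
      - injection He; intros; subst. exists ts1; apply in_last; auto. }
    apply (transfer _ _ P r r IH).
    + intros e He. rewrite cnt_app, cnt_one. specialize (Hnb e (Hzz e He)).
      rewrite cnt_app, cnt_one in Hnb. auto.
    + intros c ts a Hi. apply in_last in Hi. destruct Hi as [Hi|Hi].
      * apply Hc; apply in_last; auto.
      * injection Hi; intros; subst. apply (Hc c ts1 (Uniq 0)); apply in_last; auto.
    + auto.
    + intros e Hne; congruence.
Qed.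

Fixpoint look (G : env) (c : nat) : option nat :=
  match G with
  | [] => None
  | (k, T) :: G' => if iskey c k then
      match T with TCh ts a => arity a ts | TProc => None end
      else look G' c
  end.

Lemma look_compat G : NoDup (dom G) -> compat (look G) G.
Proof.
  induction G as [|[k T] G IH]; intros Hnd c ts a Hi; simpl in *; [tauto|].
  inversion Hnd; subst. destruct Hi as [Hi|Hi].
  - injection Hi; intros; subst. simpl; rewrite Nat.eqb_refl; auto.
  - destruct (iskey c k) eqn:E.
    + apply iskey_true in E; subst. exfalso; apply H1; eapply in_dom; eauto.
    + apply IH; auto.
Qed.

Lemma look_dom G c n : look G c = Some n -> In (KId (IChan c)) (dom G).
Proof.
  induction G as [|[k T] G IH]; simpl; [discriminate|].
  destruct (iskey c k) eqn:E; intros H.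
  - apply iskey_true in E; subst; left; auto.
  - right; auto.
Qed.

Lemma nodup_nb G : NoDup (dom G) -> nb G.
Proof.
  intros Hnd e _. induction G as [|[k T] G IH]; simpl in *; unfold cnt; simpl; [lia|].
  inversion Hnd; subst. destruct (iskey e k) eqn:E; simpl.
  - apply iskey_true in E; subst. pose proof (notin_cnt G e H1). unfold cnt in H. lia.
  - apply IH; auto.
Qed.

Theorem mainTheorem2 (G : env) (sigma : chstate) (P : proc) :
  finite_state sigma ->
  is_config sigma P ->
  config_typed G sigma P ->
  ~ err sigma P.
Proof.
  intros _ _ [Hdom [Ht Hnd]] Herr.
  destruct (typ_ok G P Ht (look G) (nodup_nb G Hnd) (look_compat G Hnd)) as [r' [Hd Hok]].
  apply (safe _ _ Herr r' Hok). intros c Hbot.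
  destruct (opt_dec (r' c) (look G c)) as [E|E].
  - rewrite E. destruct (look G c) eqn:L; auto.
    apply look_dom in L. rewrite (Hdom c L) in Hbot; discriminate.
  - destruct (Hd c E) as [ts Hz]. apply in_dom in Hz. rewrite (Hdom c Hz) in Hbot; discriminate.
Qed.
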